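(* Let $\mathcal{A}$ be an essentially small abelian category, and let $\mathrm{K}_0^{\mathrm{heap}}(\mathcal{A})$ denote its Grothendieck heap. Let $\overline{0}\in \mathrm{K}_0^{\mathrm{heap}}(\mathcal{A})$ be the class of the zero object. Then the map $\psi:\mathrm{K}_0^{\mathrm{heap}}(\mathcal{A})\to \mathrm{K}_0(\mathcal{A})_c$, $\overline{A}\mapsto \overline{A}_c$, is well defined and is an isomorphism of groups $\left(\mathrm{K}_0^{\mathrm{heap}}(\mathcal{A}),+_{\overline{0}}\right)\cong \mathrm{K}_0(\mathcal{A})_c$; that is, the retract of the Grothendieck heap along the class of the zero object recovers the classical Grothendieck group.
   Context: A heap is a set $H$ with a ternary operation $[\_,\_,\_]:H^3\to H$ satisfying $[a,b,[c,d,e]]=[[a,b,c],d,e]$ and $[x,x,y]=y=[y,x,x]$. For $e\in H$, the retract of $H$ along $e$ is the group $(H,+_e)$ with $a+_e b:=[a,e,b]$. For an essentially small category $\mathcal{C}$, its Grothendieck heap $\mathrm{K}_0^{\mathrm{heap}}(\mathcal{C})$ is the heap generated by the isomorphism classes $\overline{X}$ of objects of $\mathcal{C}$, subject to the relations $[\overline{X},\overline{Y},\overline{Z}]=\overline{X\sqcup_Y Z}$ for every pushout square $X\leftarrow Y\rightarrow Z$ in $\mathcal{C}$ in which at least one of the two maps $Y\to X$, $Y\to Z$ is a monomorphism. The classical Grothendieck group $\mathrm{K}_0(\mathcal{A})_c$ of an abelian category is the abelian group generated by classes $\overline{A}_c$ of isomorphism classes of objects subject to $\overline{B}_c=\overline{A}_c+\overline{C}_c$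 whenever there is a short exact sequence $0\to A\to B\to C\to 0$. *)

(* Defs.v *)
Set Implicit Arguments.
Unset Strict Implicit.

Record Category := {
  Ob :> Type;
  Hom : Ob -> Ob -> Type;
  idm : forall a, Hom a a;
  comp : forall a b c, Hom b c -> Hom a b -> Hom a c;
  comp_id_l : forall a b (f : Hom a b), comp (idm b) f = f;
  comp_id_r : forall a b (f : Hom a b), comp f (idm a) = f;
  comp_assoc : forall a b c d (h : Hom c d) (g : Hom b c) (f : Hom a b),
      comp h (comp g f) = comp (comp h g) f }.

Arguments Hom {c} a b : rename.
Arguments idm {c} a : rename.
Arguments comp {c a b c0} g f : rename.

Section CatDefs.
Variable C : Category.

Definition mono {a b : C} (f : Hom a b) : Prop :=
  forall x (g h : Hom x a), comp f g = comp f h -> g = h.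

Definition epi {a b : C} (f : Hom a b) : Prop :=
  forall x (g h : Hom b x), comp g f = comp h f -> g = h.

Definition is_iso {a b : C} (f : Hom a b) : Prop :=
  exists g : Hom b a, comp g f = idm a /\ comp f g = idm b.

Definition isomorphic (a b : C) : Prop := exists f : Hom a b, is_iso f.

Definition is_zero_obj (z : C) : Prop :=
  forall a : C, (exists f : Hom z a, forall g, g = f) /\
                (exists f : Hom a z, forall g, g = f).

Definition zero_mor {a b : C} (f : Hom a b) : Prop :=
  exists (z : C) (u : Hom a z) (v : Hom z b), is_zero_obj z /\ f = comp v u.

Definition is_kernel {a b K : C} (f : Hom a b) (k : Hom K a) : Prop :=
  zero_mor (comp f k) /\
  forall x (g : Hom x a), zero_mor (comp f g) ->
    exists h : Hom x K, comp k h = g /\ forall h', comp k h' = g -> h' = h.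

Definition is_cokernel {a b Q : C} (f : Hom a b) (q : Hom b Q) : Prop :=
  zero_mor (comp q f) /\
  forall x (g : Hom b x), zero_mor (comp g f) ->
    exists h : Hom Q x, comp h q = g /\ forall h', comp h' q = g -> h' = h.

Definition is_product {a b P : C} (p1 : Hom P a) (p2 : Hom P b) : Prop :=
  forall x (f : Hom x a) (g : Hom x b),
    exists h : Hom x P, (comp p1 h = f /\ comp p2 h = g) /\
      forall h', comp p1 h' = f -> comp p2 h' = g -> h' = h.

Definition is_coproduct {a b P : C} (i1 : Hom a P) (i2 : Hom b P) : Prop :=
  forall x (f : Hom a x) (g : Hom b x),
    exists h : Hom P x, (comp h i1 = f /\ comp h i2 = g) /\
      forall h', comp h' i1 = f -> comp h' i2 = g -> h' = h.

Definition is_pushout {X Y Z P : C} (f : Hom Y X) (g : Hom Y Z)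
    (i1 : Hom X P) (i2 : Hom Z P) : Prop :=
  comp i1 f = comp i2 g /\
  forall W (u : Hom X W) (v : Hom Z W), comp u f = comp v g ->
    exists h : Hom P W, (comp h i1 = u /\ comp h i2 = v) /\
      forall h', comp h' i1 = u -> comp h' i2 = v -> h' = h.

(* The (unique) additive structure
   is a consequence. *)
Definition is_abelian : Prop :=
  (exists z : C, is_zero_obj z) /\
  (forall a b : C, exists (P : C) (p1 : Hom P a) (p2 : Hom P b), is_product p1 p2) /\
  (forall a b : C, exists (P : C) (i1 : Hom a P) (i2 : Hom b P), is_coproduct i1 i2) /\
  (forall (a b : C) (f : Hom a b), exists (K : C) (k : Hom K a), is_kernel f k) /\
  (forall (a b : C) (f : Hom a b), exists (Q : C) (q : Hom b Q), is_cokernel f q) /\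
  (forall (a b : C) (f : Hom a b), mono f ->
      exists (c : C) (g : Hom b c), is_kernel g f) /\
  (forall (a b : C) (f : Hom a b), epi f ->
      exists (c : C) (g : Hom c a), is_cokernel g f).

Definition short_exact {A B D : C} (f : Hom A B) (g : Hom B D) : Prop :=
  mono f /\ epi g /\ is_kernel g f.

Inductive hterm : Type :=
  | hgen : Ob C -> hterm
  | hbr : hterm -> hterm -> hterm -> hterm.

Inductive hrel : hterm -> hterm -> Prop :=
  | hrel_refl t : hrel t t
  | hrel_sym s t : hrel s t -> hrel t s
  | hrel_trans s t u : hrel s t -> hrel t u -> hrel s u
  | hrel_cong s s' t t' u u' : hrel s s' -> hrel t t' -> hrel u u' ->
      hrel (hbr s t u) (hbr s' t' u')
  | hrel_assoc a b c d e :
      hrel (hbr a b (hbr c d e)) (hbr (hbr a b c) d e)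
  | hrel_mal_l x y : hrel (hbr x x y) y
  | hrel_mal_r x y : hrel (hbr y x x) y
  (* generators are isomorphism classes *)
  | hrel_iso a b : isomorphic a b -> hrel (hgen a) (hgen b)
  | hrel_pushout (X Y Z P : C) (f : Hom Y X) (g : Hom Y Z)
      (i1 : Hom X P) (i2 : Hom Z P) :
      is_pushout f g i1 i2 -> mono f \/ mono g ->
      hrel (hbr (hgen X) (hgen Y) (hgen Z)) (hgen P).

Inductive gterm : Type :=
  | ggen : Ob C -> gterm
  | gzero : gterm
  | gadd : gterm -> gterm -> gterm
  | gneg : gterm -> gterm.

Inductive grel : gterm -> gterm -> Prop :=
  | grel_refl t : grel t t
  | grel_sym s t : grel s t -> grel t s
  | grel_trans s t u : grel s t -> grel t u -> grel s u
  | grel_cong_add s s' t t' : grel s s' -> grel t t' -> grel (gadd s t) (gadd s' t')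
  | grel_cong_neg s s' : grel s s' -> grel (gneg s) (gneg s')
  | grel_assoc x y z : grel (gadd x (gadd y z)) (gadd (gadd x y) z)
  | grel_comm x y : grel (gadd x y) (gadd y x)
  | grel_zero x : grel (gadd gzero x) x
  | grel_neg x : grel (gadd (gneg x) x) gzero
  | grel_iso a b : isomorphic a b -> grel (ggen a) (ggen b)
  | grel_ses (A B D : C) (f : Hom A B) (g : Hom B D) :
      short_exact f g -> grel (ggen B) (gadd (ggen A) (ggen D)).

End CatDefs.

Arguments hgen {C} _.
Arguments hbr {C} _ _ _.
Arguments ggen {C} _.
Arguments gzero {C}.
Arguments gadd {C} _ _.
Arguments gneg {C} _.
Arguments hrel : clear implicits.
Arguments grel : clear implicits.

Definition quot (T : Type) (R : T -> T -> Prop) : Type :=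
  { P : T -> Prop | exists t, forall u, P u <-> R t u }.

Definition cls (T : Type) (R : T -> T -> Prop) (t : T) : quot R :=
  exist (fun P : T -> Prop => exists t0, forall u, P u <-> R t0 u)
        (R t) (ex_intro _ t (fun u => iff_refl (R t u))).

(* K_0^heap(C): heap presented by hterm / hrel (ternary op [cls s, cls t, cls u] = cls (hbr s t u)) *)
Definition K0heap (C : Category) : Type := quot (hrel C).
(* K_0(C)_c: abelian group presented by gterm / grel (cls u + cls v = cls (gadd u v)) *)
Definition K0c (C : Category) : Type := quot (grel C).

(* Main.v *)
Require Import Defs.
From Stdlib Require Import Setoid Morphisms FunctionalExtensionality PropExtensionality ProofIrrelevance IndefiniteDescription.

Section Cat.
Variable C : Category.
Variable z : Ob C.
Variable Hz : is_zero_obj z.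

Local Notation "g ∘ f" := (comp g f) (at level 40, left associativity).
Implicit Types (a b c x K Q P X Y Z T W A B D E I S : Ob C).

Definition to0 (a : C) : Hom a z :=
  proj1_sig (constructive_indefinite_description _ (proj2 (Hz a))).
Lemma to0_u a (g : Hom a z) : g = to0 a.
Proof. unfold to0. destruct constructive_indefinite_description; simpl; auto. Qed.
Definition from0 (a : C) : Hom z a :=
  proj1_sig (constructive_indefinite_description _ (proj1 (Hz a))).
Lemma from0_u a (g : Hom z a) : g = from0 a.
Proof. unfold from0. destruct constructive_indefinite_description; simpl; auto. Qed.

Definition zm (a b : C) : Hom a b := from0 b ∘ to0 a.

Lemma zm_zero a b : zero_mor (zm a b).
Proof. exists z, (to0 a), (from0 b). split; auto. Qed.

Lemma zero_zm a b (f : Hom a b) : zero_mor f -> f = zm a b.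
Proof.
  intros [z' [u [v [Hz' ->]]]].
  destruct (proj1 (Hz' b)) as [f0 Hf0].
  destruct (proj1 (Hz' z)) as [t Ht].
  assert (v = from0 b ∘ t) by (rewrite (Hf0 v), (Hf0 (from0 b ∘ t)); auto).
  subst v. rewrite <- comp_assoc. unfold zm. f_equal. apply to0_u.
Qed.

Lemma zm_l a b c (f : Hom a b) : zm b c ∘ f = zm a c.
Proof. unfold zm. rewrite <- comp_assoc. f_equal. apply to0_u. Qed.
Lemma zm_r a b c (g : Hom b c) : g ∘ zm a b = zm a c.
Proof. unfold zm. rewrite comp_assoc. f_equal. apply from0_u. Qed.

Lemma mono_zm a b x (f : Hom a b) (h : Hom x a) : mono f -> f ∘ h = zm x b -> h = zm x a.
Proof. intros Hm H. apply Hm. rewrite H, zm_r. auto. Qed.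
Lemma epi_zm a b x (f : Hom a b) (h : Hom b x) : epi f -> h ∘ f = zm a x -> h = zm b x.
Proof. intros Hm H. apply Hm. rewrite H, zm_l. auto. Qed.

Lemma ker_zero a b K (f : Hom a b) (k : Hom K a) : is_kernel f k -> f ∘ k = zm K b.
Proof. intros [H _]. apply zero_zm; auto. Qed.
Lemma ker_fact a b K (f : Hom a b) (k : Hom K a) x (g : Hom x a) :
  is_kernel f k -> f ∘ g = zm x b -> exists h, k ∘ h = g.
Proof. intros [_ H] E. destruct (H x g) as [h [Hh _]]. rewrite E; apply zm_zero. eauto. Qed.
Lemma ker_mono a b K (f : Hom a b) (k : Hom K a) : is_kernel f k -> mono k.
Proof.
  intros [H0 H] x g h E.
  destruct (H x (k ∘ g)) as [w [_ Hw]].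
  - rewrite comp_assoc, (zero_zm _ _ _ H0), zm_l. apply zm_zero.
  - rewrite (Hw g eq_refl), (Hw h (eq_sym E)). auto.
Qed.
Lemma coker_zero a b Q (f : Hom a b) (q : Hom b Q) : is_cokernel f q -> q ∘ f = zm a Q.
Proof. intros [H _]. apply zero_zm; auto. Qed.
Lemma coker_fact a b Q (f : Hom a b) (q : Hom b Q) x (g : Hom b x) :
  is_cokernel f q -> g ∘ f = zm a x -> exists h, h ∘ q = g.
Proof. intros [_ H] E. destruct (H x g) as [h [Hh _]]. rewrite E; apply zm_zero. eauto. Qed.
Lemma coker_epi a b Q (f : Hom a b) (q : Hom b Q) : is_cokernel f q -> epi q.
Proof.
  intros [H0 H] x g h E.
  destruct (H x (g ∘ q)) as [w [_ Hw]].
  - rewrite <- comp_assoc, (zero_zm _ _ _ H0), zm_r. apply zm_zero.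
  - rewrite (Hw g eq_refl), (Hw h (eq_sym E)). auto.
Qed.

Lemma mono_comp a b c (f : Hom a b) (g : Hom b c) : mono f -> mono g -> mono (g ∘ f).
Proof. intros Hf Hg x u v E. apply Hf, Hg. rewrite !comp_assoc. auto. Qed.
Lemma epi_comp a b c (f : Hom a b) (g : Hom b c) : epi f -> epi g -> epi (g ∘ f).
Proof. intros Hf Hg x u v E. apply Hg, Hf. rewrite <- !comp_assoc. auto. Qed.
Lemma mono_of_comp a b c (f : Hom a b) (g : Hom b c) : mono (g ∘ f) -> mono f.
Proof. intros H x u v E. apply H. rewrite <- !comp_assoc, E. auto. Qed.
Lemma epi_of_comp a b c (f : Hom a b) (g : Hom b c) : epi (g ∘ f) -> epi g.
Proof. intros H x u v E. apply H. rewrite !comp_assoc, E. auto. Qed.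
Lemma split_mono a b (f : Hom a b) (r : Hom b a) : r ∘ f = idm a -> mono f.
Proof. intros H. apply (mono_of_comp _ _ _ f r). rewrite H. intros x u v E.
  rewrite !comp_id_l in E. auto. Qed.
Lemma split_epi a b (f : Hom a b) (s : Hom b a) : f ∘ s = idm b -> epi f.
Proof. intros H. apply (epi_of_comp _ _ _ s f). rewrite H. intros x u v E.
  rewrite !comp_id_r in E. auto. Qed.

Lemma prod_pair a b P (p1 : Hom P a) (p2 : Hom P b) : is_product p1 p2 ->
  forall x (f : Hom x a) (g : Hom x b), exists h, p1 ∘ h = f /\ p2 ∘ h = g.
Proof. intros H x f g. destruct (H x f g) as [h [Hh _]]. eauto. Qed.
Lemma prod_ext a b P (p1 : Hom P a) (p2 : Hom P b) : is_product p1 p2 ->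
  forall x (h h' : Hom x P), p1 ∘ h = p1 ∘ h' -> p2 ∘ h = p2 ∘ h' -> h = h'.
Proof. intros H x h h' E1 E2. destruct (H x (p1 ∘ h) (p2 ∘ h)) as [w [_ Hw]].
  rewrite (Hw h eq_refl eq_refl), (Hw h' (eq_sym E1) (eq_sym E2)). auto. Qed.
Lemma coprod_pair a b P (p1 : Hom a P) (p2 : Hom b P) : is_coproduct p1 p2 ->
  forall x (f : Hom a x) (g : Hom b x), exists h, h ∘ p1 = f /\ h ∘ p2 = g.
Proof. intros H x f g. destruct (H x f g) as [h [Hh _]]. eauto. Qed.
Lemma coprod_ext a b P (p1 : Hom a P) (p2 : Hom b P) : is_coproduct p1 p2 ->
  forall x (h h' : Hom P x), h ∘ p1 = h' ∘ p1 -> h ∘ p2 = h' ∘ p2 -> h = h'.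
Proof. intros H x h h' E1 E2. destruct (H x (h ∘ p1) (h ∘ p2)) as [w [_ Hw]].
  rewrite (Hw h eq_refl eq_refl), (Hw h' (eq_sym E1) (eq_sym E2)). auto. Qed.

Variable HC : is_abelian C.

Lemma ex_prod a b : exists P (p1 : Hom P a) (p2 : Hom P b), is_product p1 p2.
Proof. apply HC. Qed.
Lemma ex_coprod a b : exists P (p1 : Hom a P) (p2 : Hom b P), is_coproduct p1 p2.
Proof. apply HC. Qed.
Lemma ex_ker a b (f : Hom a b) : exists K (k : Hom K a), is_kernel f k.
Proof. apply HC. Qed.
Lemma ex_coker a b (f : Hom a b) : exists Q (q : Hom b Q), is_cokernel f q.
Proof. apply HC. Qed.
Lemma mono_normal a b (f : Hom a b) : mono f -> exists c (g : Hom b c), is_kernel g f.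
Proof. apply HC. Qed.
Lemma epi_normal a b (f : Hom a b) : epi f -> exists c (g : Hom c a), is_cokernel g f.
Proof. apply HC. Qed.

Lemma ker_of_mono_coker a b Q (f : Hom a b) (q : Hom b Q) :
  mono f -> is_cokernel f q -> is_kernel q f.
Proof.
  intros Hm Hq. destruct (mono_normal _ _ f Hm) as [c [g0 Hg0]].
  destruct (coker_fact _ _ _ _ _ _ g0 Hq (ker_zero _ _ _ _ _ Hg0)) as [w Hw].
  split. { rewrite (coker_zero _ _ _ _ _ Hq). apply zm_zero. }
  intros x g Hg. apply zero_zm in Hg.
  destruct (ker_fact _ _ _ _ _ _ g Hg0) as [h Hh].
  { rewrite <- Hw, <- comp_assoc, Hg, zm_r. auto. }
  exists h. split; auto. intros h' E. apply Hm. congruence.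
Qed.

Lemma coker_of_epi_ker a b K (g : Hom a b) (k : Hom K a) :
  epi g -> is_kernel g k -> is_cokernel k g.
Proof.
  intros Hm Hk. destruct (epi_normal _ _ g Hm) as [c [g0 Hg0]].
  destruct (ker_fact _ _ _ _ _ _ g0 Hk (coker_zero _ _ _ _ _ Hg0)) as [w Hw].
  split. { rewrite (ker_zero _ _ _ _ _ Hk). apply zm_zero. }
  intros x h Hh. apply zero_zm in Hh.
  destruct (coker_fact _ _ _ _ _ _ h Hg0) as [t Ht].
  { rewrite <- Hw, comp_assoc, Hh, zm_l. auto. }
  exists t. split; auto. intros h' E. apply Hm. congruence.
Qed.

Lemma img_epi a b Q I (f : Hom a b) (q : Hom b Q) (m : Hom I b) (e : Hom a I) :
  is_cokernel f q -> is_kernel q m -> m ∘ e = f -> epi e.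
Proof.
  intros Hq Hm Hf T x y E.
  destruct (ex_prod I T) as [PP [p1 [p2 Hp]]].
  destruct (prod_pair _ _ _ _ _ Hp I (idm I) x) as [ax [ax1 ax2]].
  destruct (prod_pair _ _ _ _ _ Hp I (idm I) y) as [ay [ay1 ay2]].
  assert (Max : mono ax) by (apply (split_mono _ _ ax p1); auto).
  destruct (mono_normal _ _ ax Max) as [c [sg Hsg]].
  destruct (ex_ker _ _ (sg ∘ ay)) as [EE [k Hk]].
  assert (Hxy : x ∘ k = y ∘ k).
  { destruct (ker_fact _ _ _ _ _ _ (ay ∘ k) Hsg) as [j Hj].
    { rewrite comp_assoc. apply (ker_zero _ _ _ _ _ Hk). }
    assert (k = j) by (rewrite <- (comp_id_l k), <- ay1, <- comp_assoc, <- Hj,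
                         comp_assoc, ax1, comp_id_l; auto).
    subst j. rewrite <- ax2, <- ay2, <- !comp_assoc, Hj. auto. }
  destruct (ker_fact _ _ _ _ _ _ e Hk) as [e' He'].
  { assert (ay ∘ e = ax ∘ e).
    { apply (prod_ext _ _ _ _ _ Hp); rewrite !comp_assoc; rewrite ?ax1, ?ay1, ?ax2, ?ay2; auto. }
    rewrite <- comp_assoc, H, comp_assoc, (ker_zero _ _ _ _ _ Hsg), zm_l. auto. }
  assert (Mmk : mono (m ∘ k)) by (apply mono_comp; [eapply ker_mono; eauto | eapply ker_mono; eauto]).
  destruct (mono_normal _ _ _ Mmk) as [c2 [s Hs]].
  destruct (coker_fact _ _ _ _ _ _ s Hq) as [t Ht].
  { rewrite <- Hf, <- He', !comp_assoc, <- (comp_assoc s m k), (ker_zero _ _ _ _ _ Hs), zm_l. auto. }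
  destruct (ker_fact _ _ _ _ _ _ m Hs) as [j Hj].
  { rewrite <- Ht, <- comp_assoc, (ker_zero _ _ _ _ _ Hm), zm_r. auto. }
  assert (Hkj : k ∘ j = idm I).
  { apply (ker_mono _ _ _ _ _ Hm). rewrite comp_id_r, comp_assoc. auto. }
  rewrite <- (comp_id_r x), <- (comp_id_r y), <- Hkj, !comp_assoc, Hxy. auto.
Qed.

Lemma image_fact a b (f : Hom a b) :
  exists Q (q : Hom b Q) I (m : Hom I b) (e : Hom a I),
    is_cokernel f q /\ is_kernel q m /\ m ∘ e = f /\ epi e /\ mono m.
Proof.
  destruct (ex_coker _ _ f) as [Q [q Hq]].
  destruct (ex_ker _ _ q) as [I [m Hm]].
  destruct (ker_fact _ _ _ _ _ _ f Hm (coker_zero _ _ _ _ _ Hq)) as [e He].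
  exists Q, q, I, m, e. split; [auto|split;[auto|split;[auto|split]]].
  - eapply img_epi; eauto.
  - eapply ker_mono; eauto.
Qed.

Lemma zk_mono a b (f : Hom a b) :
  (forall x (h : Hom x a), f ∘ h = zm x b -> h = zm x a) -> mono f.
Proof.
  intros H.
  destruct (image_fact _ _ f) as [Q [q [I [m [e [Hq [Hm [He [Ee Mm]]]]]]]]].
  destruct (epi_normal _ _ e Ee) as [c [h Hh]].
  assert (h = zm c a).
  { apply H. rewrite <- He, <- comp_assoc, (coker_zero _ _ _ _ _ Hh), zm_r. auto. }
  subst h.
  destruct (coker_fact _ _ _ _ _ _ (idm a) Hh) as [w Hw]. { apply zm_r. }
  intros x u v E. rewrite <- He, <- !comp_assoc in E. apply Mm in E.
  rewrite <- (comp_id_l u), <- (comp_id_l v), <- Hw, <- !comp_assoc, E. auto.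
Qed.

Lemma zc_epi a b (f : Hom a b) :
  (forall x (h : Hom b x), h ∘ f = zm a x -> h = zm b x) -> epi f.
Proof.
  intros H.
  destruct (image_fact _ _ f) as [Q [q [I [m [e [Hq [Hm [He [Ee Mm]]]]]]]]].
  assert (q = zm b Q) by (apply H; apply (coker_zero _ _ _ _ _ Hq)).
  subst q.
  destruct (ker_fact _ _ _ _ _ _ (idm b) Hm) as [w Hw]. { apply zm_l. }
  rewrite <- He. apply epi_comp; auto. apply (split_epi _ _ m w); auto.
Qed.

Lemma mono_epi_iso a b (f : Hom a b) : mono f -> epi f ->
  exists g : Hom b a, g ∘ f = idm a /\ f ∘ g = idm b.
Proof.
  intros Hm He. destruct (mono_normal _ _ f Hm) as [c [g0 Hg0]].
  assert (g0 = zm b c).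
  { apply He. rewrite (ker_zero _ _ _ _ _ Hg0), zm_l. auto. }
  subst g0.
  destruct (ker_fact _ _ _ _ _ _ (idm b) Hg0) as [g Hg]. { apply zm_l. }
  exists g. split; auto. apply Hm. rewrite comp_assoc, Hg, comp_id_l, comp_id_r. auto.
Qed.


Lemma coproj_ker a b P (j1 : Hom a P) (j2 : Hom b P) (c1 : Hom P a) (c2 : Hom P b) :
  is_coproduct j1 j2 -> c1 ∘ j1 = idm a -> c1 ∘ j2 = zm b a -> c2 ∘ j2 = idm b ->
  is_kernel c1 j2.
Proof.
  intros Hc H11 H12 H22. apply ker_of_mono_coker.
  - apply (split_mono _ _ j2 c2); auto.
  - split. { rewrite H12. apply zm_zero. }
    intros x t Ht. apply zero_zm in Ht. exists (t ∘ j1). split.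
    + apply (coprod_ext _ _ _ _ _ Hc); rewrite <- comp_assoc; [rewrite H11, comp_id_r|rewrite H12, zm_r, Ht]; auto.
    + intros h' E. rewrite <- E, <- comp_assoc, H11, comp_id_r. auto.
Qed.

Lemma proj_coker a b P (p1 : Hom P a) (p2 : Hom P b) (a1 : Hom a P) (a2 : Hom b P) :
  is_product p1 p2 -> p1 ∘ a1 = idm a -> p2 ∘ a1 = zm a b -> p2 ∘ a2 = idm b ->
  is_cokernel a1 p2.
Proof.
  intros Hp H11 H12 H22. apply coker_of_epi_ker.
  - apply (split_epi _ _ p2 a2); auto.
  - split. { rewrite H12. apply zm_zero. }
    intros x t Ht. apply zero_zm in Ht. exists (p1 ∘ t). split.
    + apply (prod_ext _ _ _ _ _ Hp); rewrite comp_assoc; [rewrite H11, comp_id_l|rewrite H12, zm_l, Ht]; auto.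
    + intros h' E. rewrite <- E, comp_assoc, H11, comp_id_l. auto.
Qed.

Lemma neg_exists Y P (p1 p2 : Hom P Y) (a b : Hom Y P) :
  is_product p1 p2 -> p1 ∘ a = idm Y -> p2 ∘ a = zm Y Y -> p1 ∘ b = zm Y Y -> p2 ∘ b = idm Y ->
  exists n0 : Hom Y P, p1 ∘ n0 = idm Y /\
    forall T (t : Hom P T), t ∘ n0 = zm Y T -> t ∘ a = t ∘ b.
Proof.
  intros Hp Ha1 Ha2 Hb1 Hb2.
  destruct (ex_coprod Y Y) as [U [j1 [j2 Hu]]].
  destruct (coprod_pair _ _ _ _ _ Hu P a b) as [th [Th1 Th2]].
  destruct (coprod_pair _ _ _ _ _ Hu Y (idm Y) (zm Y Y)) as [c1 [C11 C12]].
  destruct (coprod_pair _ _ _ _ _ Hu Y (zm Y Y) (idm Y)) as [c2 [C21 C22]].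
  destruct (coprod_pair _ _ _ _ _ Hu Y (idm Y) (idm Y)) as [nab [N1 N2]].
  assert (E1 : p1 ∘ th = c1).
  { apply (coprod_ext _ _ _ _ _ Hu); rewrite <- comp_assoc; rewrite ?Th1, ?Th2; congruence. }
  assert (E2 : p2 ∘ th = c2).
  { apply (coprod_ext _ _ _ _ _ Hu); rewrite <- comp_assoc; rewrite ?Th1, ?Th2; congruence. }
  assert (Mth : mono th).
  { apply zk_mono. intros x k Hk.
    destruct (ker_fact _ _ _ _ _ _ k (coproj_ker _ _ _ _ _ _ _ Hu C11 C12 C22)) as [k' Hk'].
    { rewrite <- E1, <- comp_assoc, Hk, zm_r. auto. }
    assert (k' = zm x Y).
    { rewrite <- (comp_id_l k'), <- C22, <- comp_assoc, Hk', <- E2, <- comp_assoc, Hk, zm_r. auto. }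
    subst k'. rewrite <- Hk', zm_r. auto. }
  assert (Eth : epi th).
  { apply zc_epi. intros x t Ht.
    destruct (coker_fact _ _ _ _ _ _ t (proj_coker _ _ _ _ _ _ _ Hp Ha1 Ha2 Hb2)) as [h Hh].
    { rewrite <- Th1, comp_assoc, Ht, zm_l. auto. }
    assert (h = zm Y x).
    { rewrite <- (comp_id_r h), <- Hb2, comp_assoc, Hh, <- Th2, comp_assoc, Ht, zm_l. auto. }
    subst h. rewrite <- Hh, zm_l. auto. }
  destruct (mono_epi_iso _ _ th Mth Eth) as [thi [Ti1 Ti2]].
  set (s := nab ∘ thi).
  assert (Sa : s ∘ a = idm Y).
  { unfold s. rewrite <- Th1, <- comp_assoc, (comp_assoc thi), Ti1, comp_id_l. auto. }
  assert (Sb : s ∘ b = idm Y).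
  { unfold s. rewrite <- Th2, <- comp_assoc, (comp_assoc thi), Ti1, comp_id_l. auto. }
  destruct (ex_ker _ _ s) as [K [k Hk]].
  assert (Hsk : is_cokernel k s).
  { apply coker_of_epi_ker; auto. apply (split_epi _ _ s a); auto. }
  assert (Mk : mono (p1 ∘ k)).
  { apply zk_mono. intros x w Hw.
    assert (Ew : k ∘ w = b ∘ (p2 ∘ (k ∘ w))).
    { apply (prod_ext _ _ _ _ _ Hp).
      - rewrite (comp_assoc p1 b), Hb1, zm_l, comp_assoc. auto.
      - rewrite (comp_assoc p2 b), Hb2, comp_id_l. auto. }
    assert (p2 ∘ (k ∘ w) = zm x Y).
    { rewrite <- (comp_id_l (p2 ∘ (k ∘ w))), <- Sb, <- comp_assoc, <- Ew,
        comp_assoc, (ker_zero _ _ _ _ _ Hk), zm_l. auto. }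
    rewrite H, zm_r in Ew. apply (mono_zm _ _ _ k); auto. eapply ker_mono; eauto. }
  assert (Ek : epi (p1 ∘ k)).
  { apply zc_epi. intros x t Ht.
    destruct (coker_fact _ _ _ _ _ _ (t ∘ p1) Hsk) as [h Hh].
    { rewrite <- comp_assoc. auto. }
    assert (h = zm Y x).
    { rewrite <- (comp_id_r h), <- Sb, comp_assoc, Hh, <- comp_assoc, Hb1, zm_r. auto. }
    subst h. rewrite <- (comp_id_r t), <- Ha1, comp_assoc, <- Hh, zm_l, zm_l. auto. }
  destruct (mono_epi_iso _ _ _ Mk Ek) as [iota [I1 I2]].
  exists (k ∘ iota). split.
  - rewrite comp_assoc. auto.
  - intros T t Ht.
    assert (t ∘ k = zm K T).
    { assert (Ht' : (t ∘ k) ∘ iota = zm Y T) by (rewrite <- comp_assoc; auto).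
      rewrite <- (comp_id_r (t ∘ k)), <- I1, comp_assoc, Ht', zm_l. auto. }
    destruct (coker_fact _ _ _ _ _ _ t Hsk) as [h Hh]. { auto. }
    rewrite <- Hh, <- !comp_assoc, Sa, Sb. auto.
Qed.


Instance grel_Equiv : Equivalence (grel C).
Proof. split; [intro; apply grel_refl| intros ??; apply grel_sym| intros ???; apply grel_trans]. Qed.
Instance gadd_Proper : Proper (grel C ==> grel C ==> grel C) (@gadd C).
Proof. intros ?? H ?? H'. apply grel_cong_add; auto. Qed.
Instance gneg_Proper : Proper (grel C ==> grel C) (@gneg C).
Proof. intros ?? H. apply grel_cong_neg; auto. Qed.

Local Notation "x +' y" := (gadd x y) (at level 50, left associativity).
Local Notation "-' x" := (gneg x) (at level 35).

Lemma gA (x y w : gterm C) : grel C (x +' (y +' w)) (x +' y +' w).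
Proof. apply grel_assoc. Qed.
Lemma gC (x y : gterm C) : grel C (x +' y) (y +' x).
Proof. apply grel_comm. Qed.
Lemma g0l (x : gterm C) : grel C (gzero +' x) x.
Proof. apply grel_zero. Qed.
Lemma g0r (x : gterm C) : grel C (x +' gzero) x.
Proof. rewrite gC. apply g0l. Qed.
Lemma gNl (x : gterm C) : grel C (-' x +' x) gzero.
Proof. apply grel_neg. Qed.
Lemma gNr (x : gterm C) : grel C (x +' -' x) gzero.
Proof. rewrite gC. apply gNl. Qed.
Lemma gN0 : grel C (-' gzero) (@gzero C).
Proof. rewrite <- (g0r (-' gzero)). apply gNl. Qed.

Lemma gz0 : grel C (ggen z) gzero.
Proof.
  assert (H : grel C (ggen z) (ggen z +' ggen z)).
  { apply grel_ses with (f := idm z) (g := idm z). split; [|split].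
    - apply (split_mono _ _ _ (idm z)). apply comp_id_l.
    - apply (split_epi _ _ _ (idm z)). apply comp_id_l.
    - split. + exists z, (idm z), (idm z). split; auto.
      + intros x g _. exists g. split. apply comp_id_l. intros h' E. rewrite comp_id_l in E. auto. }
  symmetry. transitivity (-' ggen z +' ggen z). { symmetry; apply gNl. }
  transitivity (-' ggen z +' (ggen z +' ggen z)). { apply gadd_Proper; [reflexivity|exact H]. }
  rewrite gA, gNl, g0l. reflexivity.
Qed.

Lemma pushout_mono_leg X Y Z P (f : Hom Y X) (g : Hom Y Z) (i1 : Hom X P) (i2 : Hom Z P) :
  is_pushout f g i1 i2 -> mono f -> mono i2.
Proof.
  intros [Hcomm Huniv] Hf.
  destruct (ex_prod X Z) as [XZ [px [pz Hxz]]].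
  destruct (ex_prod Y Y) as [YY [p1 [p2 Hyy]]].
  destruct (prod_pair _ _ _ _ _ Hxz X (idm X) (zm X Z)) as [ax [Ax1 Ax2]].
  destruct (prod_pair _ _ _ _ _ Hxz Z (zm Z X) (idm Z)) as [bz [Bz1 Bz2]].
  destruct (prod_pair _ _ _ _ _ Hyy Y (idm Y) (zm Y Y)) as [a [A1 A2]].
  destruct (prod_pair _ _ _ _ _ Hyy Y (zm Y Y) (idm Y)) as [b [B1 B2]].
  destruct (neg_exists _ _ _ _ _ _ Hyy A1 A2 B1 B2) as [n0 [Hn1 Hn]].
  destruct (prod_pair _ _ _ _ _ Hxz YY (f ∘ p1) (g ∘ p2)) as [F [F1 F2]].
  set (N := F ∘ n0).
  assert (HN : px ∘ N = f).
  { unfold N. rewrite comp_assoc, F1, <- comp_assoc, Hn1, comp_id_r. auto. }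
  assert (MN : mono N).
  { apply (mono_of_comp _ _ _ N px). rewrite HN. auto. }
  destruct (ex_coker _ _ N) as [W [c Hc]].
  assert (Hk : is_kernel c N) by (apply ker_of_mono_coker; auto).
  assert (Fa : F ∘ a = ax ∘ f).
  { apply (prod_ext _ _ _ _ _ Hxz); rewrite !comp_assoc.
    - rewrite F1, Ax1, <- comp_assoc, A1, comp_id_r, comp_id_l. auto.
    - rewrite F2, Ax2, <- comp_assoc, A2, zm_r, zm_l. auto. }
  assert (Fb : F ∘ b = bz ∘ g).
  { apply (prod_ext _ _ _ _ _ Hxz); rewrite !comp_assoc.
    - rewrite F1, Bz1, <- comp_assoc, B1, zm_r, zm_l. auto.
    - rewrite F2, Bz2, <- comp_assoc, B2, comp_id_r, comp_id_l. auto. }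
  assert (Hcc : (c ∘ ax) ∘ f = (c ∘ bz) ∘ g).
  { assert (E := Hn W (c ∘ F)).
    rewrite <- !comp_assoc, <- Fa, <- Fb, !comp_assoc. apply E.
    rewrite <- comp_assoc. fold N. apply (coker_zero _ _ _ _ _ Hc). }
  assert (Mv : mono (c ∘ bz)).
  { apply zk_mono. intros x w Hw.
    destruct (ker_fact _ _ _ _ _ _ (bz ∘ w) Hk) as [h Hh].
    { rewrite comp_assoc. auto. }
    assert (h = zm x Y).
    { apply (mono_zm _ _ _ f); auto. rewrite <- HN, <- comp_assoc, Hh, comp_assoc, Bz1, zm_l. auto. }
    subst h. rewrite zm_r in Hh.
    rewrite <- (comp_id_l w), <- Bz2, <- comp_assoc, <- Hh, zm_r. auto. }
  destruct (Huniv W (c ∘ ax) (c ∘ bz) Hcc) as [h [[Hh1 Hh2] _]].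
  intros x u v E. apply Mv. rewrite <- Hh2, <- !comp_assoc, E. auto.
Qed.

Lemma pushout_K0 X Y Z P (f : Hom Y X) (g : Hom Y Z) (i1 : Hom X P) (i2 : Hom Z P) :
  is_pushout f g i1 i2 -> mono f ->
  grel C (ggen P) (ggen X +' -' ggen Y +' ggen Z).
Proof.
  intros Hpo Hf.
  assert (Mi2 := pushout_mono_leg _ _ _ _ _ _ _ _ Hpo Hf).
  destruct Hpo as [Hcomm Huniv].
  destruct (ex_coker _ _ f) as [Q [q Hq]].
  assert (S1 : grel C (ggen X) (ggen Y +' ggen Q)).
  { apply (grel_ses (f := f) (g := q)). split; [auto|split].
    - eapply coker_epi; eauto.
    - apply ker_of_mono_coker; auto. }
  destruct (Huniv Q q (zm Z Q)) as [r [[R1 R2] _]].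
  { rewrite (coker_zero _ _ _ _ _ Hq), zm_l. auto. }
  assert (Hr : is_cokernel i2 r).
  { split. { rewrite R2. apply zm_zero. }
    intros W v Hv. apply zero_zm in Hv.
    destruct (coker_fact _ _ _ _ _ _ (v ∘ i1) Hq) as [w Hw].
    { rewrite <- comp_assoc, Hcomm, comp_assoc, Hv, zm_l. auto. }
    exists w. split.
    - destruct (Huniv W (v ∘ i1) (v ∘ i2)) as [h [_ Hu]].
      { rewrite <- !comp_assoc, Hcomm. auto. }
      rewrite (Hu v eq_refl eq_refl). apply Hu.
      + rewrite <- comp_assoc, R1. auto.
      + rewrite <- comp_assoc, R2, zm_r, Hv. auto.
    - intros h' E. apply (coker_epi _ _ _ _ _ Hq). rewrite Hw, <- R1, comp_assoc, E. auto. }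
  assert (S2 : grel C (ggen P) (ggen Z +' ggen Q)).
  { apply (grel_ses (f := i2) (g := r)). split; [auto|split].
    - eapply coker_epi; eauto.
    - apply ker_of_mono_coker; auto. }
  rewrite S1, S2. rewrite (gC (ggen Y)), <- (gA (ggen Q)), gNr, g0r, gC. reflexivity.
Qed.


Instance hrel_Equiv : Equivalence (hrel C).
Proof. split; [intro; apply hrel_refl| intros ??; apply hrel_sym| intros ???; apply hrel_trans]. Qed.
Instance hbr_Proper : Proper (hrel C ==> hrel C ==> hrel C ==> hrel C) (@hbr C).
Proof. intros ?? H ?? H' ?? H''. apply hrel_cong; auto. Qed.

Local Notation e := (@hgen C z).
Local Notation hadd x y := (hbr x e y).
Local Notation hneg x := (hbr e x e).

Lemma hNr (x : hterm C) : hrel C (hadd x (hneg x)) e.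
Proof. rewrite hrel_assoc, hrel_mal_r, hrel_mal_l. reflexivity. Qed.
Lemma hNl (x : hterm C) : hrel C (hadd (hneg x) x) e.
Proof. rewrite <- hrel_assoc, hrel_mal_l, hrel_mal_r. reflexivity. Qed.
Lemma hdec (a b c : hterm C) : hrel C (hbr a b c) (hadd (hadd a (hneg b)) c).
Proof. rewrite (hrel_assoc a e e b e), hrel_mal_r, <- hrel_assoc, hrel_mal_l. reflexivity. Qed.

Definition hcomm (x y : hterm C) := hrel C (hadd x y) (hadd y x).

Lemma hcomm_sym (x y : hterm C) : hcomm x y -> hcomm y x.
Proof. unfold hcomm. intros; symmetry; auto. Qed.
Lemma hcomm_add (x a b : hterm C) : hcomm x a -> hcomm x b -> hcomm x (hadd a b).
Proof.
  unfold hcomm. intros Ha Hb.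
  rewrite hrel_assoc, Ha, <- hrel_assoc, Hb, hrel_assoc. reflexivity.
Qed.
Lemma hcomm_neg (x b : hterm C) : hcomm x b -> hcomm x (hneg b).
Proof.
  unfold hcomm. intros Hb. symmetry.
  transitivity (hadd (hadd (hneg b) x) (hadd b (hneg b))).
  { rewrite hNr. symmetry. apply hrel_mal_r. }
  rewrite hrel_assoc, <- (hrel_assoc (hneg b) e x e b), Hb, (hrel_assoc (hneg b) e b e x), hNl, hrel_mal_l.
  reflexivity.
Qed.
Lemma hcomm_br (x a b c : hterm C) : hcomm x a -> hcomm x b -> hcomm x c -> hcomm x (hbr a b c).
Proof.
  intros Ha Hb Hc. unfold hcomm. rewrite (hdec a b c).
  apply hcomm_add; auto. apply hcomm_add; auto. apply hcomm_neg; auto.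
Qed.

Lemma hcomm_gen A B : hcomm (hgen A) (hgen B).
Proof.
  destruct (ex_coprod A B) as [U [j1 [j2 Hu]]].
  assert (M : forall a, mono (from0 a)).
  { intros a x g h _. rewrite (to0_u _ g), (to0_u _ h). auto. }
  assert (P1 : is_pushout (from0 A) (from0 B) j1 j2).
  { split. { rewrite (from0_u _ (j1 ∘ from0 A)), (from0_u _ (j2 ∘ from0 B)). auto. }
    intros W u v _. apply Hu. }
  assert (P2 : is_pushout (from0 B) (from0 A) j2 j1).
  { split. { rewrite (from0_u _ (j1 ∘ from0 A)), (from0_u _ (j2 ∘ from0 B)). auto. }
    intros W u v _. destruct (Hu W v u) as [h [[H1 H2] H3]].
    exists h. split; [auto | intros h' E1 E2; apply H3; auto]. }
  unfold hcomm.
  rewrite (hrel_pushout P1 (or_introl (M A))), (hrel_pushout P2 (or_introl (M B))).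
  reflexivity.
Qed.

Lemma hcomm_all (s t : hterm C) : hcomm s t.
Proof.
  assert (G : forall (s0 : hterm C) (B0 : Ob C), hcomm s0 (hgen B0)).
  { clear s t. intros s0; induction s0; intros B0.
    - apply hcomm_gen.
    - apply hcomm_sym, hcomm_br; apply hcomm_sym; auto. }
  induction t.
  - apply G.
  - apply hcomm_br; auto.
Qed.

Lemma heap_ses A B D (f : Hom A B) (g : Hom B D) :
  short_exact f g -> hrel C (hgen B) (hadd (hgen A) (hgen D)).
Proof.
  intros [Hf [Hg Hk]].
  assert (Hcok := coker_of_epi_ker _ _ _ _ _ Hg Hk).
  assert (Po : is_pushout (to0 A) f (from0 D) g).
  { split. { rewrite (ker_zero _ _ _ _ _ Hk). reflexivity. }
    intros W u v E.
    destruct (coker_fact _ _ _ _ _ _ v Hcok) as [h Hh].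
    { rewrite <- E, (from0_u _ u). reflexivity. }
    exists h. split. { split; auto. rewrite (from0_u _ u), (from0_u _ (h ∘ from0 D)). auto. }
    intros h' _ E2. apply (coker_epi _ _ _ _ _ Hcok). congruence. }
  rewrite <- (hrel_pushout Po (or_intror Hf)).
  rewrite hrel_assoc, hrel_mal_r, hrel_mal_l. reflexivity.
Qed.

Fixpoint phi (s : hterm C) : gterm C :=
  match s with
  | hgen A => ggen A
  | hbr a b c => phi a +' -' phi b +' phi c
  end.
Fixpoint chi (u : gterm C) : hterm C :=
  match u with
  | ggen A => hgen A
  | gzero => e
  | gadd u v => hadd (chi u) (chi v)
  | gneg u => hneg (chi u)
  end.

Lemma phi_ok (s t : hterm C) : hrel C s t -> grel C (phi s) (phi t).
Proof.
  induction 1; simpl.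
  - reflexivity.
  - symmetry; auto.
  - etransitivity; eauto.
  - rewrite IHhrel1, IHhrel2, IHhrel3. reflexivity.
  - rewrite !gA. reflexivity.
  - rewrite gNr, g0l. reflexivity.
  - rewrite <- gA, gNl, g0r. reflexivity.
  - apply grel_iso; auto.
  - symmetry. destruct H0 as [Hf|Hg].
    + apply (pushout_K0 _ _ _ _ _ _ _ _ H Hf).
    + assert (H' : is_pushout g f i2 i1).
      { destruct H as [H1 H2]. split; auto. intros W u v E.
        destruct (H2 W v u (eq_sym E)) as [h [[E1 E2] E3]].
        exists h. split; [auto | intros h' F1 F2; apply E3; auto]. }
      rewrite (pushout_K0 _ _ _ _ _ _ _ _ H' Hg).
      rewrite (gC (ggen Z +' -' ggen Y)), (gC (ggen Z)), gA. reflexivity.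
Qed.

Lemma chi_ok (u v : gterm C) : grel C u v -> hrel C (chi u) (chi v).
Proof.
  induction 1; simpl.
  - reflexivity.
  - symmetry; auto.
  - etransitivity; eauto.
  - rewrite IHgrel1, IHgrel2. reflexivity.
  - rewrite IHgrel. reflexivity.
  - apply hrel_assoc.
  - apply hcomm_all.
  - apply hrel_mal_l.
  - apply hNl.
  - apply hrel_iso; auto.
  - eapply heap_ses; eauto.
Qed.

Lemma phi_chi (u : gterm C) : grel C (phi (chi u)) u.
Proof.
  induction u; simpl.
  - reflexivity.
  - apply gz0.
  - rewrite IHu1, IHu2, gz0, gN0, g0r. reflexivity.
  - rewrite IHu, gz0, g0l, g0r. reflexivity.
Qed.

Lemma chi_phi (s : hterm C) : hrel C (chi (phi s)) s.
Proof.
  induction s; simpl.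
  - reflexivity.
  - rewrite IHs1, IHs2, IHs3. symmetry. apply hdec.
Qed.

End Cat.
#[export] Existing Instances grel_Equiv hrel_Equiv gadd_Proper gneg_Proper hbr_Proper.

Section Quot.
Variable T : Type.
Variable R : T -> T -> Prop.
Hypothesis HR : Equivalence R.

Definition rep (x : quot R) : T :=
  proj1_sig (constructive_indefinite_description _ (proj2_sig x)).

Lemma cls_eq a b : R a b -> cls R a = cls R b.
Proof.
  intros H. unfold cls.
  assert (E : R a = R b).
  { apply functional_extensionality; intro u. apply propositional_extensionality.
    split; intro; [symmetry in H|]; etransitivity; eauto. }
  generalize (ex_intro (fun t0 : T => forall u : T, R a u <-> R t0 u) a (fun u : T => iff_refl (R a u))).
  generalize (ex_intro (fun t0 : T => forall u : T, R b u <-> R t0 u) b (fun u : T => iff_refl (R b u))).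
  rewrite E. intros p1 p2. f_equal. apply proof_irrelevance.
Qed.

Lemma cls_inv a b : cls R a = cls R b -> R a b.
Proof.
  intros H. apply (f_equal (@proj1_sig _ _)) in H. simpl in H.
  rewrite H. reflexivity.
Qed.

Lemma cls_surj (x : quot R) : exists t, x = cls R t.
Proof.
  destruct x as [P [t Ht]]. exists t. unfold cls.
  assert (E : P = R t).
  { apply functional_extensionality; intro u. apply propositional_extensionality. auto. }
  subst P. f_equal. apply proof_irrelevance.
Qed.

Lemma rep_cls t : R (rep (cls R t)) t.
Proof.
  unfold rep. destruct constructive_indefinite_description as [r Hr]. simpl.
  symmetry. apply Hr. reflexivity.
Qed.
End Quot.
Arguments rep {T R} x.

Theorem theorem2p4 (C : Category) (HC : is_abelian C) (z : Ob C) (Hz : is_zero_obj z) :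
  exists psi : K0heap C -> K0c C,
    (forall A : Ob C, psi (cls (hrel C) (hgen A)) = cls (grel C) (ggen A)) /\
    (forall (s t : hterm C) (u v : gterm C),
        psi (cls (hrel C) s) = cls (grel C) u ->
        psi (cls (hrel C) t) = cls (grel C) v ->
        psi (cls (hrel C) (hbr s (hgen z) t)) = cls (grel C) (gadd u v)) /\
    (forall x y : K0heap C, psi x = psi y -> x = y) /\
    (forall y : K0c C, exists x : K0heap C, psi x = y).
Proof.
  pose proof (grel_Equiv C) as EG. pose proof (hrel_Equiv C) as EH.
  set (psi := fun x : K0heap C => cls (grel C) (phi C (rep x))).
  assert (Hpsi : forall s, psi (cls (hrel C) s) = cls (grel C) (phi C s)).
  { intros s. unfold psi. apply cls_eq; auto. apply (phi_ok C z Hz HC). apply rep_cls; auto. }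
  exists psi. split; [|split; [|split]].
  - intros A. rewrite Hpsi. reflexivity.
  - intros s t u v Hs Ht. rewrite Hpsi in *. apply cls_eq; auto.
    apply (cls_inv _ _ EG) in Hs. apply (cls_inv _ _ EG) in Ht. simpl.
    rewrite Hs, Ht. rewrite (gz0 C z Hz). rewrite (gN0 C), (g0r C). reflexivity.
  - intros x y E. destruct (cls_surj _ _ x) as [s ->]. destruct (cls_surj _ _ y) as [t ->].
    rewrite !Hpsi in E. apply (cls_inv _ _ EG) in E. apply cls_eq; auto.
    apply (chi_ok C z Hz HC) in E. rewrite !(chi_phi C z) in E. auto.
  - intros y. destruct (cls_surj _ _ y) as [u ->]. exists (cls (hrel C) (chi C z u)).
    rewrite Hpsi. apply cls_eq; auto. apply (phi_chi C z Hz).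
Qed.
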